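(* The function $\gamma(p)=\dfrac{p^2}{\log(e-\log p)}$ is increasing and convex on the interval $(0,1)$. *)

(* Defs.v *)
From Stdlib Require Import Reals.
Open Scope R_scope.

Definition gamma_fn (p : R) : R := p ^ 2 / ln (exp 1 - ln p).

Definition strictly_increasing_on (f : R -> R) (a b : R) : Prop :=
  forall x y, a < x < b -> a < y < b -> x < y -> f x < f y.

Definition convex_on (f : R -> R) (a b : R) : Prop :=
  forall x y t, a < x < b -> a < y < b -> 0 <= t <= 1 ->
    f (t * x + (1 - t) * y) <= t * f x + (1 - t) * f y.

(* Main.v *)
Require Import Defs.
From Stdlib Require Import Reals Lra.
From Coquelicot Require Import Coquelicot.
Open Scope R_scope.
Definition u x := exp 1 - ln x.
Definition L x := ln (u x).
Definition gp x := x * (2 / L x + / (u x * (L x)^2)).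
Lemma e2 : 2 < exp 1.
Proof. pose proof (exp_ineq1 1 R1_neq_R0). lra. Qed.
Lemma uL x : 0 < x < 1 -> 2 < u x /\ 0 < L x.
Proof. intros [h1 h2]. unfold L, u.
 assert (ln x < 0) by (rewrite <- ln_1; apply ln_increasing; lra).
 pose proof e2. split. lra. rewrite <- ln_1; apply ln_increasing; lra. Qed.
Lemma der x : 0 < x < 1 -> derivable_pt_lim gamma_fn x (gp x).
Proof. intros hx. destruct (uL x hx) as [h1 h2]. apply is_derive_Reals.
 unfold gamma_fn, gp. unfold L, u in *. auto_derive.
 - repeat split; try lra; intro Hc; change (exp 1 + - ln x) with (exp 1 - ln x) in Hc; lra.
 - change (exp 1 + - ln x) with (exp 1 - ln x). 
   set (a := exp 1 - ln x) in *. set (b := ln a) in *. field. repeat split; lra.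
Qed.
Lemma gp_pos x : 0 < x < 1 -> 0 < gp x.
Proof. intros hx. destruct (uL x hx). unfold gp.
 apply Rmult_lt_0_compat. lra. apply Rplus_lt_0_compat.
 apply Rdiv_lt_0_compat; lra. apply Rinv_0_lt_compat. apply Rmult_lt_0_compat; try lra. apply pow_lt; lra. Qed.
Lemma gp_mono x y : 0 < x < 1 -> 0 < y < 1 -> x <= y -> gp x <= gp y.
Proof. intros hx hy hxy. destruct (uL x hx) as [a1 a2]. destruct (uL y hy) as [b1 b2].
 assert (hu : u y <= u x). { unfold u. assert (ln x <= ln y).
   destruct (Req_dec x y). subst; lra. apply Rlt_le, ln_increasing; lra. lra. }
 assert (hL : L y <= L x). { unfold L. destruct (Req_dec (u x) (u y)). rewrite H; lra.
   apply Rlt_le, ln_increasing; lra. }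
 assert (g1 : 2 / L x <= 2 / L y). { unfold Rdiv. apply Rmult_le_compat_l. lra.
   apply Rinv_le_contravar; lra. }
 assert (g2 : / (u x * L x ^ 2) <= / (u y * L y ^ 2)). { apply Rinv_le_contravar.
   apply Rmult_lt_0_compat; try lra; apply pow_lt; lra.
   apply Rmult_le_compat; try lra. apply pow_le; lra. simpl. apply Rmult_le_compat; nra. }
 assert (0 < / (u x * L x ^ 2)). { apply Rinv_0_lt_compat. apply Rmult_lt_0_compat; try lra. apply pow_lt; lra. }
 assert (0 < 2 / L x) by (apply Rdiv_lt_0_compat; lra).
 unfold gp. apply Rmult_le_compat; lra. Qed.

Theorem lemma26 :
  strictly_increasing_on gamma_fn 0 1 /\ convex_on gamma_fn 0 1.
Proof.
 assert (mvt : forall a b, 0 < a < 1 -> 0 < b < 1 -> a < b ->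
   exists c, gamma_fn b - gamma_fn a = gp c * (b - a) /\ a < c < b).
 { intros a b ha hb hab. apply MVT_cor2; auto. intros c hc. apply der; lra. }
 split.
 - intros x y hx hy hxy. destruct (mvt x y hx hy hxy) as [c [hc1 hc2]].
   assert (0 < gp c) by (apply gp_pos; lra). nra.
 - assert (key : forall x y t, 0 < x < 1 -> 0 < y < 1 -> x < y -> 0 < t < 1 ->
     gamma_fn (t * x + (1 - t) * y) <= t * gamma_fn x + (1 - t) * gamma_fn y).
   { intros x y t hx hy hxy ht. set (z := t * x + (1 - t) * y).
     assert (x < z < y) by (unfold z; nra).
     destruct (mvt x z hx ltac:(lra) ltac:(lra)) as [c1 [e1 hc1]].
     destruct (mvt z y ltac:(lra) hy ltac:(lra)) as [c2 [e2' hc2]].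
     assert (gp c1 <= gp c2) by (apply gp_mono; lra).
     assert (t * (z - x) = (1 - t) * (y - z)) by (unfold z; ring).
     assert (0 <= t * (z - x)) by nra.
     assert (t * (gp c1 * (z - x)) <= (1 - t) * (gp c2 * (y - z))).
     { replace (t * (gp c1 * (z - x))) with (gp c1 * (t * (z - x))) by ring.
       replace ((1 - t) * (gp c2 * (y - z))) with (gp c2 * ((1 - t) * (y - z))) by ring.
       rewrite <- H1. apply Rmult_le_compat_r; lra. }
     nra. }
   intros x y t hx hy ht.
   destruct (Req_dec t 0) as [->|t0].
   { replace (0 * x + (1 - 0) * y) with y by ring. lra. }
   destruct (Req_dec t 1) as [->|t1].
   { replace (1 * x + (1 - 1) * y) with x by ring. lra. }
   destruct (Rtotal_order x y) as [h|[h|h]].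
   + apply key; auto; lra.
   + subst. replace (t * y + (1 - t) * y) with y by ring. lra.
   + replace (t * x + (1 - t) * y) with ((1 - t) * y + (1 - (1 - t)) * x) by ring.
     replace (t * gamma_fn x + (1 - t) * gamma_fn y) with ((1 - t) * gamma_fn y + (1 - (1 - t)) * gamma_fn x) by ring.
     apply key; auto; lra.
Qed.
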